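(* Consider the three-door Monty Hall game described in the context as a zero-sum game in which Conie's payoff is her winning indicator. Let $P^*$ be Conie's mixed strategy assigning probability $1/3$ to each of $1\,\mathrm{s}\,\mathrm{s}$, $2\,\mathrm{s}\,\mathrm{s}$, $3\,\mathrm{s}\,\mathrm{s}$, and let $Q^*_{1,1,1}$ be Monte's mixed strategy assigning probability $1/3$ to each of $(1,2)$, $(2,1)$, $(3,1)$. Then the value of the game is $V=\max_P\min_Q W(P,Q)=\min_Q\max_P W(P,Q)=2/3$, where $W(P,Q)$ is Conie's winning probability, and $(P^*,Q^*_{1,1,1})$ is a minimax solution (saddle point). Moreover $P^*$ is equalizing: $W(P^*,Q)=2/3$ for every mixed strategy $Q$ of Monte.
   Context: Doors are numbered $1,2,3$. A pure strategy of Monte is a pair $(\theta,d)$ with $\theta\in\{1,2,3\}$ (the door hiding the prize) and $d\in\{1,2,3\}\setminus\{\theta\}$ (six strategies). A pure strategy of Conie is a triple $x\,a\,b$ with $x\in\{1,2,3\}$ and $a,b\in\{\mathrm{h},\mathrm{s}\}$ (twelve strategies). Under the profile $((\theta,d),x\,a\,b)$: Monte offers door $y=\theta$ if $x\neq\theta$ and $y=d$ if $x=\theta$; Conie's action is $a$ if $y$ is the smaller of the two doors in $\{1,2,3\}\setminus\{x\}$ and $b$ otherwise; her final choice is $z=x$ for action $\mathrm{h}$ and $z=y$ for action $\mathrm{s}$; she wins (payoff 1) iff $z=\theta$, else payoff 0, and Monte's payoff is the negative of Conie's. Mixed strategies are probability distributions on pure strategies, played independently; $W(P,Q)$ is the resulting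 probability that Conie wins. A profile $(P^*,Q^* )$ is a minimax solution if $W(P^*,Q^* )=\max_P W(P,Q^* )=\min_Q W(P^*,Q)$. *)

(* Defs.v *)
From mathcomp Require Import all_boot all_order all_algebra.
Set Implicit Arguments. Unset Strict Implicit. Unset Printing Implicit Defensive.
Import Order.TTheory GRing.Theory Num.Theory.
Local Open Scope ring_scope.

(* Doors 1,2,3 are represented by the ordinals 0,1,2 of 'I_3
   (door k+1 <-> ordinal k; the order is preserved). *)
Definition door := 'I_3.

Definition monte := {p : door * door | p.1 != p.2}.
Definition theta (m : monte) : door := (val m).1.
Definition dalt (m : monte) : door := (val m).2.

(* Conie's pure strategies x a b; actions encoded as bool:
   false = h (hold), true = s (switch). *)
Definition hold := false.
Definition switch := true.
Definition conie := (door * bool * bool)%type.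
Definition cx (c : conie) : door := c.1.1.
Definition ca (c : conie) : bool := c.1.2.
Definition cb (c : conie) : bool := c.2.

Definition offer (m : monte) (x : door) : door :=
  if x != theta m then theta m else dalt m.

Definition is_smaller_other (x y : door) : bool :=
  (y != x) && [forall w : door, (w != x) ==> (y <= w)%N].

Definition final_choice (m : monte) (c : conie) : door :=
  let y := offer m (cx c) in
  let act := if is_smaller_other (cx c) y then ca c else cb c in
  if act then y else cx c.

Definition wins (m : monte) (c : conie) : bool := final_choice m c == theta m.

Definition is_mixed (R : realFieldType) (T : finType) (p : {ffun T -> R}) : Prop :=
  (forall t, 0 <= p t) /\ \sum_(t : T) p t = 1.

Definition W (R : realFieldType) (P : {ffun conie -> R}) (Q : {ffun monte -> R}) : R :=
  \sum_(c : conie) \sum_(m : monte) P c * Q m * (wins m c)%:R.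

Definition is_min_of (R : realFieldType) (A : Type) (S : A -> Prop) (f : A -> R) (v : R) : Prop :=
  (exists2 x, S x & f x = v) /\ (forall x, S x -> v <= f x).
Definition is_max_of (R : realFieldType) (A : Type) (S : A -> Prop) (f : A -> R) (v : R) : Prop :=
  (exists2 x, S x & f x = v) /\ (forall x, S x -> f x <= v).

Definition maxmin_value (R : realFieldType) (v : R) : Prop :=
  exists mn : {ffun conie -> R} -> R,
    (forall P, is_mixed P -> is_min_of (@is_mixed R monte) (W P) (mn P)) /\
    is_max_of (@is_mixed R conie) mn v.

Definition minmax_value (R : realFieldType) (v : R) : Prop :=
  exists mx : {ffun monte -> R} -> R,
    (forall Q, is_mixed Q -> is_max_of (@is_mixed R conie) (fun P => W P Q) (mx Q)) /\
    is_min_of (@is_mixed R monte) mx v.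

Definition minimax_solution (R : realFieldType) (Ps : {ffun conie -> R}) (Qs : {ffun monte -> R}) : Prop :=
  is_mixed Ps /\ is_mixed Qs /\
  is_max_of (@is_mixed R conie) (fun P => W P Qs) (W Ps Qs) /\
  is_min_of (@is_mixed R monte) (W Ps) (W Ps Qs).

Definition Pstar (R : realFieldType) : {ffun conie -> R} :=
  [ffun c => if ca c && cb c then 3%:R^-1 else 0].

(* Q^*_{1,1,1} : 1/3 on each of (1,2), (2,1), (3,1) *)
Definition Qstar (R : realFieldType) : {ffun monte -> R} :=
  [ffun m => if ((nat_of_ord (theta m), nat_of_ord (dalt m)) \in
                  [:: (0%N, 1%N); (1%N, 0%N); (2%N, 0%N)])
             then 3%:R^-1 else 0].

(* Main.v *)
Require Import Defs.
From mathcomp Require Import all_boot all_order all_algebra.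
Import Order.TTheory GRing.Theory Num.Theory.
Local Open Scope ring_scope.


Definition d0 : door := @Ordinal 3 0 isT.
Definition d1 : door := @Ordinal 3 1 isT.
Definition d2 : door := @Ordinal 3 2 isT.
Definition dl : seq door := [:: d0; d1; d2].
Definition cl : seq conie := [seq (xa, b) | xa <- [seq (x, a) | x <- dl, a <- [:: false; true]], b <- [:: false; true]].
Definition mk (a b : door) (h : a != b) : monte := exist _ (a, b) h.
Definition ml : seq monte := [:: mk d0 d1 isT; mk d0 d2 isT; mk d1 d0 isT; mk d1 d2 isT;
   mk d2 d0 isT; mk d2 d1 isT].

Lemma mem_dl (w : door) : w \in dl.
Proof. by case: w => [[|[|[|w]]] hw]. Qed.
Lemma mem_cl (c : conie) : c \in cl.
Proof. by case: c => [[x a] b]; case: x => [[|[|[|x]]] hx] //; case: a; case: b. Qed.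
Lemma mem_ml (m : monte) : m \in ml.
Proof.
case: m => [[a b] h]; case: a h => [[|[|[|a]]] ha] //; case: b => [[|[|[|b]]] hb] // h.
Qed.

Definition iso' (x y : door) : bool :=
  (y != x) && all (fun w : door => (w != x) ==> (y <= w)%N) dl.
Lemma isoE x y : is_smaller_other x y = iso' x y.
Proof.
rewrite /is_smaller_other /iso'; congr (_ && _).
apply/forallP/allP => H w //; exact: H (mem_dl w).
Qed.
Definition wins' (m : monte) (c : conie) : bool :=
  (let y := offer m (cx c) in
  let act := if iso' (cx c) y then ca c else cb c in
  if act then y else cx c) == theta m.
Lemma winsE m c : wins m c = wins' m c.
Proof. by rewrite /wins /final_choice isoE. Qed.

Definition qs (m : monte) := ((nat_of_ord (theta m), nat_of_ord (dalt m)) \in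
                  [:: (0%N, 1%N); (1%N, 0%N); (2%N, 0%N)]).
Lemma c1 : all (fun m => \sum_(c <- cl) (ca c && cb c && wins' m c : nat) == 2)%N ml.
Proof. rewrite unlock. by vm_compute. Qed.
Lemma c2 : all (fun c => \sum_(m <- ml) (qs m && wins' m c : nat) <= 2)%N cl.
Proof. rewrite unlock. by vm_compute. Qed.
Lemma c3 : (\sum_(m <- ml) (qs m : nat) = 3)%N.
Proof. rewrite unlock. by vm_compute. Qed.
Lemma c4 : (\sum_(c <- cl) (ca c && cb c : nat) = 3)%N.
Proof. rewrite unlock. by vm_compute. Qed.

Set Implicit Arguments. Unset Strict Implicit.
Section S.
Variable R : realFieldType.

Lemma sumC (F : conie -> R) : \sum_(c : conie) F c = \sum_(c <- cl) F c.
Proof.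
apply: perm_big; apply: uniq_perm; [exact: index_enum_uniq | by [] |].
by move=> x; rewrite mem_index_enum mem_cl.
Qed.
Lemma sumM (F : monte -> R) : \sum_(m : monte) F m = \sum_(m <- ml) F m.
Proof.
apply: perm_big; apply: uniq_perm; [exact: index_enum_uniq | by [] |].
by move=> x; rewrite mem_index_enum mem_ml.
Qed.

Lemma PstarE c w : Pstar R c * (w : bool)%:R = 3%:R^-1 * (ca c && cb c && w : nat)%:R.
Proof. by rewrite ffunE; case: (_ && _); case: w; rewrite /= ?mulr1 ?mulr0 ?mul0r. Qed.
Lemma QstarE m w : Qstar R m * (w : bool)%:R = 3%:R^-1 * (qs m && w : nat)%:R.
Proof. by rewrite ffunE -/(qs m); case: (qs m); case: w; rewrite /= ?mulr1 ?mulr0 ?mul0r. Qed.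

Definition hM (P : {ffun conie -> R}) m := \sum_c P c * (wins m c)%:R.
Definition gC (Q : {ffun monte -> R}) c := \sum_m Q m * (wins m c)%:R.

Lemma W_Q P Q : W P Q = \sum_m Q m * hM P m.
Proof.
rewrite /W exchange_big; apply: eq_bigr => m _; rewrite mulr_sumr.
by apply: eq_bigr => c _; rewrite mulrA [Q m * P c]mulrC.
Qed.
Lemma W_P P Q : W P Q = \sum_c P c * gC Q c.
Proof. by apply: eq_bigr => c _; rewrite mulr_sumr; apply: eq_bigr => m _; rewrite mulrA. Qed.

Lemma K1 m : hM (Pstar R) m = 2%:R / 3%:R.
Proof.
rewrite /hM sumC (eq_bigr (fun c => 3%:R^-1 * (ca c && cb c && wins' m c : nat)%:R)).
  rewrite -mulr_sumr -natr_sum.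
  have /allP/(_ m (mem_ml m))/eqP -> := c1.
  by rewrite mulrC.
by move=> c _; rewrite PstarE winsE.
Qed.

Lemma K2 c : gC (Qstar R) c <= 2%:R / 3%:R.
Proof.
rewrite /gC sumM (eq_bigr (fun m => 3%:R^-1 * (qs m && wins' m c : nat)%:R)).
  rewrite -mulr_sumr -natr_sum mulrC ler_wpM2r ?invr_ge0 ?ler0n // ler_nat.
  by have /allP/(_ c (mem_cl c)) := c2.
by move=> m _; rewrite QstarE winsE.
Qed.

Lemma mixP : is_mixed (Pstar R).
Proof.
split=> [c|]; first by rewrite ffunE; case: ifP; rewrite ?invr_ge0 ?ler0n.
rewrite sumC (eq_bigr (fun c => 3%:R^-1 * (ca c && cb c : nat)%:R)).
  by rewrite -mulr_sumr -natr_sum c4 mulVf ?pnatr_eq0.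
by move=> c _; rewrite -[Pstar R c]mulr1 -[1]/((true : nat)%:R) PstarE andbT.
Qed.
Lemma mixQ : is_mixed (Qstar R).
Proof.
split=> [c|]; first by rewrite ffunE; case: ifP; rewrite ?invr_ge0 ?ler0n.
rewrite sumM (eq_bigr (fun m => 3%:R^-1 * (qs m : nat)%:R)).
  by rewrite -mulr_sumr -natr_sum c3 mulVf ?pnatr_eq0.
by move=> m _; rewrite -[Qstar R m]mulr1 -[1]/((true : nat)%:R) QstarE andbT.
Qed.

Lemma mix_lb (T : finType) (p : {ffun T -> R}) (g : T -> R) v :
  is_mixed p -> (forall t, v <= g t) -> v <= \sum_t p t * g t.
Proof.
case=> p0 p1 H; rewrite -[v]mul1r -p1 mulr_suml.
by apply: ler_sum => t _; rewrite ler_wpM2l.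
Qed.
Lemma mix_ub (T : finType) (p : {ffun T -> R}) (g : T -> R) v :
  is_mixed p -> (forall t, g t <= v) -> \sum_t p t * g t <= v.
Proof.
case=> p0 p1 H; rewrite -[v]mul1r -p1 mulr_suml.
by apply: ler_sum => t _; rewrite ler_wpM2l.
Qed.

Lemma ex_min_seq (T : eqType) (g : T -> R) (x : T) (s : seq T) :

  exists2 t0, t0 \in x :: s & forall t, t \in x :: s -> g t0 <= g t.
Proof.
elim: s x => [|y s IH] x.
  by exists x; [rewrite inE | move=> t; rewrite inE => /eqP ->].
have [t0 Ht0 H] := IH y; case: (lerP (g x) (g t0)) => h.
  exists x; first exact: mem_head.
  move=> t; rewrite inE => /orP [/eqP -> // | Ht]; exact: le_trans h (H t Ht).
exists t0; first by rewrite inE Ht0 orbT.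
move=> t; rewrite inE => /orP [/eqP -> | Ht]; [exact: ltW | exact: H].
Qed.

Lemma exmin (T : finType) (g : T -> R) (t1 : T) : exists t0 : T, [forall t, g t0 <= g t].
Proof.
have [t0 _ H] := @ex_min_seq T g t1 (enum T).
by exists t0; apply/forallP => t; apply: H; rewrite inE mem_enum orbT.
Qed.
Lemma exmax (T : finType) (g : T -> R) (t1 : T) : exists t0 : T, [forall t, g t <= g t0].
Proof.
have [t0 /forallP H] := @exmin T (fun t => - g t) t1.
by exists t0; apply/forallP => t; rewrite -lerN2 H.
Qed.

Definition delta (T : finType) (t0 : T) : {ffun T -> R} := [ffun t => (t == t0)%:R].
Lemma delta_mixed (T : finType) (t0 : T) : is_mixed (delta t0).
Proof.
split=> [t|]; first by rewrite ffunE ler0n.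
rewrite (bigD1 t0) //= big1 => [|t /negbTE h]; first by rewrite ffunE eqxx addr0.
by rewrite ffunE h.
Qed.
Lemma delta_sum (T : finType) (t0 : T) (g : T -> R) : \sum_t delta t0 t * g t = g t0.
Proof.
rewrite (bigD1 t0) //= ffunE eqxx mul1r big1 ?addr0 // => t /negbTE h.
by rewrite ffunE h mul0r.
Qed.

End S.

Theorem mainTheorem6 (R : realFieldType) :
  [/\ maxmin_value (2%:R / 3%:R : R),
      minmax_value (2%:R / 3%:R : R),
      minimax_solution (Pstar R) (Qstar R),
      W (Pstar R) (Qstar R) = 2%:R / 3%:R
    & forall Q : {ffun monte -> R}, is_mixed Q -> W (Pstar R) Q = 2%:R / 3%:R].
Proof.
have eqP1 Q : is_mixed Q -> W (Pstar R) Q = 2%:R / 3%:R.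
  move=> HQ; rewrite W_Q; apply/eqP; rewrite eq_le mix_lb ?mix_ub // => m;
  by rewrite K1.
have ubQ P : is_mixed P -> W P (Qstar R) <= 2%:R / 3%:R.
  by move=> HP; rewrite W_P mix_ub // => c; apply: K2.
have m1 : monte := mk d0 d1 isT.
have c0 : conie := (d0, true, true).
split.
- pose t0 (P : {ffun conie -> R}) := xchoose (exmin (hM P) m1).
  exists (fun P => hM P (t0 P)); split.
    move=> P HP; have /forallP Ht := xchooseP (exmin (hM P) m1).
    split; first by exists (delta R (t0 P)); [exact: delta_mixed | rewrite W_Q delta_sum].
    by move=> Q HQ; rewrite W_Q mix_lb.
  split; first by exists (Pstar R); [exact: (mixP R) | rewrite K1].
  move=> P HP; have /forallP Ht := xchooseP (exmin (hM P) m1).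
  apply: le_trans (ubQ P HP); rewrite W_Q mix_lb //; exact: (mixQ R).
- pose t0 (Q : {ffun monte -> R}) := xchoose (exmax (gC Q) c0).
  exists (fun Q => gC Q (t0 Q)); split.
    move=> Q HQ; have /forallP Ht := xchooseP (exmax (gC Q) c0).
    split; first by exists (delta R (t0 Q)); [exact: delta_mixed | rewrite W_P delta_sum].
    by move=> P HP; rewrite W_P mix_ub.
  split.
    exists (Qstar R); first exact: (mixQ R).
    have /forallP Ht := xchooseP (exmax (gC (Qstar R)) c0).
    apply/eqP; rewrite eq_le K2 /= -{1}(eqP1 _ (mixQ R)) W_P mix_ub //; exact: (mixP R).
  move=> Q HQ; have /forallP Ht := xchooseP (exmax (gC Q) c0).
  rewrite -(eqP1 Q HQ) W_P; apply: mix_ub => //; exact: (mixP R).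
- split; first exact: (mixP R).
  split; first exact: (mixQ R).
  split.
    split; first by exists (Pstar R); [exact: (mixP R) |].
    by move=> P HP; rewrite (eqP1 _ (mixQ R)); apply: ubQ.
  split; first by exists (Qstar R); [exact: (mixQ R) |].
  by move=> Q HQ; rewrite (eqP1 _ (mixQ R)) (eqP1 _ HQ).
- exact: eqP1 (mixQ R).
- exact: eqP1.
Qed.
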